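(* Let $n\geq 5$ be an integer. There is a set $X$ of partitions of $n$ with the following properties: (1) there is no integer $1\le i\le n/2$ which is a partial sum of $x$ for every $x\in X$; (2) for every $x\in X$ there exists an integer $1\le i\le n/2$ which is a partial sum of $y$ for every $y\in X\setminus\{x\}$; (3) $|X|>\frac n2-\log n$.
   Context: Logarithms are in base $2$. A partition of $n$ is a finite multiset $(a_1,\dots,a_t)$ of positive integers with sum $n$. An integer $m$ is a partial sum of $(a_1,\dots,a_t)$ if $m=a_{j_1}+\cdots+a_{j_\ell}$ for some $\ell\ge 1$ and $1\le j_1<\dots<j_\ell\le t$. *)

(* Defs.v *)
From mathcomp Require Import all_boot.
From Stdlib Require Import Reals.

(* A partition of n, represented canonically as the nonincreasing list of its
   parts (so a finite multiset of positive integers corresponds to exactly one list). *)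
Definition is_partition (n : nat) (s : seq nat) : bool :=
  [&& sorted geq s, all (fun a => 0 < a) s & sumn s == n].

Definition is_partial_sum (m : nat) (s : seq nat) : Prop :=
  exists t : seq nat, [&& subseq t s, t != [::] & sumn t == m].

Definition log2 (x : R) : R := (ln x / ln 2)%R.

(* Main.v *)
Require Import Defs.
From mathcomp Require Import all_boot.
From mathcomp Require Import zify.
From Stdlib Require Import Reals Lra.


Fixpoint ps (l : seq nat) (v : nat) : bool :=
  match l with
  | [::] => v == 0
  | a :: l' => ps l' v || ((a <= v) && ps l' (v - a))
  end.

Lemma ps0 l : ps l 0.
Proof. by elim: l => //= a l ->. Qed.

Lemma ps_le {l v} : ps l v -> v <= sumn l.
Proof.
elim: l v => [|a l IH] v /=; first by move/eqP->.
case/orP=> [/IH|/andP[av /IH]]; lia.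
Qed.

Lemma ps_consL a {l v} : ps l v -> ps (a :: l) v.
Proof. by move=> /= ->. Qed.

Lemma ps_consR a {l v} : ps l v -> ps (a :: l) (a + v).
Proof. by move=> H /=; rewrite leq_addr addKn H orbT. Qed.

Lemma ps_cat {l1 l2 u w} : ps l1 u -> ps l2 w -> ps (l1 ++ l2) (u + w).
Proof.
elim: l1 u => [|a l1 IH] u /=; first by move/eqP-> => ->.
case/orP=> [/IH H /H|/andP[au /IH H] /H]; first by move=> ->.
move=> H2; apply/orP; right; rewrite (leq_trans au (leq_addr _ _)) /=.
by rewrite -addnBAC.
Qed.

Lemma ps_ones k v : ps (nseq k 1) v = (v <= k).
Proof.
elim: k v => [|k IH] v /=; first by case: v.
rewrite !IH; case: v => [|v] //=; rewrite subn1 /=; lia.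
Qed.

Lemma ps_compl {l v} : ps l v -> ps l (sumn l - v).
Proof.
elim: l v => [|a l IH] v /=; first by move/eqP->.
case/orP=> [H|/andP[av H]].
  have vl := ps_le H.
  by have := ps_consR a (IH _ H); rewrite addnBA.
have vl := ps_le H.
rewrite (_ : a + sumn l - v = sumn l - (v - a)); last by lia.
by apply: ps_consL; apply: IH.
Qed.


Lemma ps_subseq l v : ps l v <-> exists t, subseq t l && (sumn t == v).
Proof.
elim: l v => [|a l IH] v /=.
  split; first by move/eqP->; exists [::].
  by case=> t /andP[]; case: t => //= _ /eqP <-.
split.
  case/orP=> [/IH [t /andP[st et]]|/andP[av /IH [t /andP[st /eqP et]]]].
    by exists t; apply/andP; split; [exact: subseq_trans st (subseq_cons l a)|].
  by exists (a :: t); rewrite /= eqxx st /= et subnKC.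
case=> [[|b t] /andP[st /eqP et]]; first by rewrite -et ps0.
move: st; rewrite [subseq _ _]/=; case: eqP => [<-|_] st.
  by apply/orP; right; rewrite -et /= leq_addr addKn; apply/IH; exists t; apply/andP; split; [exact: st|].
by apply/orP; left; apply/IH; exists (b :: t); apply/andP; split; [exact: st|rewrite -et].
Qed.

Lemma ps_sound l v : 1 <= v -> is_partial_sum v l <-> ps l v.
Proof.
move=> v1; rewrite ps_subseq /is_partial_sum; split.
  by case=> t /and3P[a _ c]; exists t; rewrite a c.
case=> t /andP[a c]; exists t; rewrite a c andbT /=.
by apply/eqP=> t0; move: c; rewrite t0 /= => /eqP v0; rewrite -v0 in v1.
Qed.

Lemma ps_ext l1 l2 : ps l1 =1 ps l2 -> forall a, ps (a :: l1) =1 ps (a :: l2).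
Proof. by move=> E a v /=; rewrite !E. Qed.


Lemma leq_sub2and a b v : (a <= v) && (b <= v - a) = (a + b <= v).
Proof.
case av: (a <= v); first by rewrite leq_subRL.
by apply/esym/negbTE; move/negbT: av; rewrite -!ltnNge => /leq_trans; apply; rewrite leq_addr.
Qed.

Lemma ps_swap a b l : ps (a :: b :: l) =1 ps (b :: a :: l).
Proof.
move=> v /=; rewrite !andb_orr !andbA !leq_sub2and [b + a]addnC subnAC.
by case: (a <= v) (b <= v) (a + b <= v) (ps l v) (ps l (v-a)) (ps l (v-b)) (ps l (v-b-a)) => [] [] [] [] [] [] [].
Qed.

Lemma ps_mid s1 a s2 : ps (s1 ++ a :: s2) =1 ps (a :: s1 ++ s2).
Proof.
elim: s1 => [|b s1 IH] //= v.
have := ps_ext _ _ IH b v; rewrite /= => ->.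
by have := ps_swap b a (s1 ++ s2) v.
Qed.

Lemma ps_perm l1 l2 : perm_eq l1 l2 -> ps l1 =1 ps l2.
Proof.
elim: l1 l2 => [|a l1 IH] l2 pe.
  by move: pe; rewrite perm_sym => /perm_nilP ->.
have al2 : a \in l2 by rewrite -(perm_mem pe) mem_head.
case/splitPr: al2 pe => s1 s2 pe.
move=> v; rewrite ps_mid.
have pe' : perm_eq l1 (s1 ++ s2).
  by rewrite -(perm_cons a); apply: (perm_trans pe); by rewrite -(cat1s a s2) -(cat1s a (s1 ++ s2)) perm_catCA.
exact: (ps_ext _ _ (IH _ pe') a v).
Qed.


Lemma ps_lack c big k v : all (leq c) big -> ps (big ++ nseq k 1) v -> (v <= k) || (c <= v).
Proof.
elim: big v => [|a big IH] v /=; first by rewrite ps_ones => _ ->.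
case/andP=> ca ab; case/orP=> [/(IH _ ab) //|/andP[av _]].
by rewrite (leq_trans ca av) orbT.
Qed.

Definition Cov l j B := forall v, v <= B -> v != j -> ps l v.

Definition Zb j d := [:: j.+1 + d; j.+1].

Lemma Z_cov {j d} : 1 <= j -> d <= j -> Cov (Zb j d ++ nseq j.-1 1) j (j.*2 + d).
Proof.
move=> j1 dj v vB vj; rewrite /Zb cat_cons cat_cons cat0s.
case: (ltnP v j) => vlt.
  by apply: ps_consL; apply: ps_consL; rewrite ps_ones; lia.
case: (leqP v j.*2) => v2.
  apply: ps_consL; rewrite (_ : v = j.+1 + (v - j.+1)); last by move: vj; lia.
  by apply: ps_consR; rewrite ps_ones; move: vj; lia.
rewrite (_ : v = j.+1 + d + (v - (j.+1 + d))); last by lia.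
by apply: ps_consR; apply: ps_consL; rewrite ps_ones; lia.
Qed.

Lemma Cov_step {l j B c} : Cov l j B -> j + c <= B -> Cov (c :: l) j (B + c).
Proof.
move=> C jc v vB vj; case: (leqP v B) => vb; first by apply: ps_consL; apply: C.
rewrite (_ : v = c + (v - c)); last by lia.
by apply: ps_consR; apply: C; lia.
Qed.

Lemma Cov_nseq {l j B} K : Cov l j B -> j.*2 < B -> Cov (nseq K j.+1 ++ l) j (B + K * j.+1).
Proof.
move=> C jB; elim: K => [|K IH] /=; first by rewrite ?mul0n addn0.
rewrite mulSn [j.+1 + _]addnC addnA; apply: Cov_step => //; lia.
Qed.

Definition Ybig j m :=
  let E := m - (3 * j).+1 in
  let q := E.-1 %/ j.+1 in
  let r := E.-1 %% j.+1 in
  if E <= j then Zb j E else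
  if r < j then nseq q j.+1 ++ Zb j r.+1
  else if 2 <= q then nseq (q - 2) j.+1 ++ [:: j.+2; j.+1] ++ Zb j j
  else j.+2 :: Zb j j.

Definition Y j m := Ybig j m ++ nseq j.-1 1.

Lemma sumn_nseq k a : sumn (nseq k a) = k * a.
Proof. by elim: k => //= k ->; rewrite mulSn. Qed.

Lemma Y_prop {j m} : 1 <= j -> (3 * j).+1 <= m -> m != 4 * j + 2 -> (1 < j) || (m != 5 * j + 3) ->
  [/\ sumn (Y j m) = m, Cov (Y j m) j (m - j.+1) & all (leq j.+1) (Ybig j m)].
Proof.
move=> j1 m1 m2 m3.
have e1 := divn_eq (m - (3 * j).+1).-1 j.+1.
have e2 : (m - (3 * j).+1).-1 %% j.+1 < j.+1 by rewrite ltn_mod.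
rewrite /Y /Ybig.
set E := m - (3 * j).+1 in e1 e2 *.
set q := E.-1 %/ j.+1 in e1 *.
set r := E.-1 %% j.+1 in e1 e2 *.
have eE : E = m - (3 * j).+1 by [].
clearbody E q r.
case: (leqP E j) => Ej.
  split.
  - rewrite sumn_cat /= sumn_nseq; lia.
  - have := Z_cov j1 Ej; rewrite (_ : j.*2 + E = m - j.+1) //; lia.
  - rewrite /Zb /= leq_addr leqnn //.
case: (ltnP r j) => rj.
  split.
  - rewrite sumn_cat sumn_cat /= !sumn_nseq; lia.
  - rewrite -catA; have := Cov_nseq q (Z_cov j1 rj) .
    rewrite (_ : j.*2 + r.+1 + q * j.+1 = m - j.+1); last by lia.
    by apply; lia.
  - by rewrite all_cat /Zb /= leq_addr leqnn all_nseq leqnn orbT.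
case: (leqP 2 q) => q2.
  have qj : 2 * j.+1 <= q * j.+1 by rewrite leq_mul2r q2 orbT.
  split.
  - rewrite !sumn_cat /= !sumn_nseq; rewrite mulnBl; lia.
  - rewrite -!catA; have C1 := Z_cov j1 (leqnn j).
    have C2 := Cov_step C1 (_ : j + j.+1 <= j.*2 + j).
    have C3 := Cov_step (C2 ltac:(lia)) (_ : j + j.+2 <= j.*2 + j + j.+1).
    have := Cov_nseq (q - 2) (C3 ltac:(lia)).
    rewrite (_ : j.*2 + j + j.+1 + j.+2 + (q - 2) * j.+1 = m - j.+1); last by rewrite mulnBl; lia.
    by apply; lia.
  - by rewrite all_cat /Zb /= leq_addr !leqnn ltnW // all_nseq leqnn orbT.
have qv : q = 0 \/ q = 1 by lia.
have {e1} e1 : E.-1 = j \/ E.-1 = j.+1 + j by case: qv => qv; rewrite qv in e1; lia.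
split.
- rewrite !sumn_cat /= !sumn_nseq; lia.
- have C1 := Z_cov j1 (leqnn j).
  have := Cov_step C1 (_ : j + j.+2 <= j.*2 + j).
  rewrite (_ : j.*2 + j + j.+2 = m - j.+1); last by lia.
  by apply; lia.
- by rewrite /Zb /= leq_addr !leqnn ltnW.
Qed.


Lemma expn_pow m n : expn m n = Nat.pow m n.
Proof. by elim: n => [|n IH] //; rewrite expnS IH. Qed.

Lemma real_bound (n s k : nat) : (expn 2 (2 * k).+1 < expn n 2)%N -> (n <= 2 * (s + k) + 1)%N ->
  (INR s > INR n / 2 - log2 (INR n))%R.
Proof.
rewrite !expn_pow; move=> H1b /leP H2.
have n0' : (0 < n)%N by case: n H1b H2.
have n0 : (0 < INR n)%R by apply: lt_0_INR; apply/ltP.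
move/ltP: H1b => H1.
have H3 := lt_INR _ _ H1; rewrite !pow_INR in H3.
have H4 := ln_increasing _ _ (pow_lt _ _ (lt_0_INR 2 (ltac:(apply/ltP; done)))) H3.
rewrite !ln_pow // in H4; last by apply: lt_0_INR; apply/ltP.
have hL := ln_lt_2.
set L := ln 2 in H4 hL *.
idtac.
have H5 := le_INR _ _ H2.
rewrite plus_INR mult_INR plus_INR in H5.
rewrite (S_INR) mult_INR in H4.
rewrite /log2 -/L.
set Ln := ln (INR n) in H4 *.
have E : (Ln / L * L = Ln)%R by field; lra.
match goal with H: _ |- _ => idtac end.
have A : ((INR k + / 2) * L < Ln / L * L)%R.
  rewrite E. rewrite (_ : INR 2 = 2%R) in H4; last by []. simpl in H4. lra.
apply Rmult_lt_reg_r in A; last lra.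
rewrite (_ : INR 2 = 2%R) in H5; last by []. rewrite (_ : INR 1 = 1%R) in H5; last by [].
lra.
Qed.


Definition hh n := n./2.
Definition j0 n := (hh n).-1 %/ 3.
Definition jsel n p := j0 n %/ expn 2 (trunc_log 2 (j0 n %/ (hh n - p))).
Definition spec n := [&& ~~ odd n, 3 %| hh n & 0 < j0 n].
Definition Brange n := iota (hh n - j0 n) (j0 n).-1.
Definition isJ n v := [|| v == hh n, spec n && (v == hh n - j0 n - 1) | has (fun p => jsel n p == v) (Brange n)].
Definition top n := (n - hh n + 2) :: nseq (hh n - 2) 1.
Definition xp n p :=
  if p == (hh n).-1 then top n
  else if hh n - j0 n <= p then (n - (p + jsel n p)) :: Y (jsel n p) (p + jsel n p)
  else if spec n && (p == hh n - j0 n - 2) then [:: p.+2; p.+2] ++ nseq p.-1 1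
  else if (hh n).-1 <= p.*2 then [:: n - p.*2; p.+1] ++ nseq p.-1 1
  else Y p n.
Definition PP n := [seq p <- iota 1 (hh n) | ~~ isJ n p].
Definition XX n := [seq sort geq (xp n p) | p <- PP n].

Definition GOOD n :=
  [/\ forall p, p \in PP n -> sumn (xp n p) = n /\ all (fun a => 0 < a) (xp n p),
      forall p, p \in PP n -> ps (xp n p) p = false,
      forall p q, p \in PP n -> q \in PP n -> q != p -> ps (xp n p) q,
      forall v, 1 <= v <= hh n -> isJ n v -> exists2 p, p \in PP n & ps (xp n p) v = false
    & expn 2 (2 * count (isJ n) (iota 1 (hh n))).+1 < expn n 2].

Lemma ps_sort l : ps (sort geq l) =1 ps l.
Proof. by apply: ps_perm; rewrite perm_sort. Qed.

Lemma total_geq : total geq.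
Proof. by move=> x y; rewrite /geq /= leq_total. Qed.

Lemma mem_PP n p : (p \in PP n) = [&& 1 <= p, p <= hh n & ~~ isJ n p].
Proof.
rewrite /PP mem_filter mem_iota addnC addn1 ltnS.
by case: (isJ n p); case: (1 <= p); case: (p <= hh n).
Qed.

Theorem main_of_good n : GOOD n ->
  exists X : seq (seq nat),
    [/\ uniq X, all (is_partition n) X,
        ~ (exists i : nat, [/\ 1 <= i, i.*2 <= n & forall x, x \in X -> is_partial_sum i x]),
        (forall x, x \in X ->
           exists i : nat, [/\ 1 <= i, i.*2 <= n &
             forall y, y \in X -> y != x -> is_partial_sum i y])
      & (INR (size X) > INR n / 2 - log2 (INR n))%R].
Proof.
case=> G1 G2 G3 G4 G5.
exists (XX n); split.
- rewrite map_inj_in_uniq; first by rewrite filter_uniq // iota_uniq.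
  move=> p q pP qP E; apply/eqP; apply: contraT => pq.
  have qp : q != p by rewrite eq_sym.
  by have := G3 _ _ pP qP qp; rewrite -ps_sort E ps_sort (G2 _ qP).
- apply/allP=> x /mapP[p pP ->]; have [s1 s2] := G1 _ pP.
  have pe := permEl (perm_sort geq (xp n p)).
  by rewrite /is_partition (sort_sorted total_geq) (perm_all _ pe) (perm_sumn pe) s1 s2 eqxx.
- case=> i [i1 i2 H].
  have ih : i <= hh n by rewrite /hh geq_half_double.
  case Ji: (isJ n i).
    have [p pP pl] := G4 i (ltac:(by rewrite i1 ih)) Ji.
    have := H _ (map_f (fun p => sort geq (xp n p)) pP).
    by rewrite ps_sound // ps_sort pl.
  have iP : i \in PP n by rewrite mem_PP i1 ih Ji.
  have := H _ (map_f (fun p => sort geq (xp n p)) iP).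
  by rewrite ps_sound // ps_sort G2.
- move=> x /mapP[p pP ->]; exists p.
  move: (pP); rewrite mem_PP => /and3P[p1 ph _].
  split => //; first by rewrite -geq_half_double.
  move=> y /mapP[q qP ->] ne.
  have qp : p != q by apply: contraNneq ne => ->.
  by apply/(ps_sound _ _ p1); rewrite ps_sort; apply: G3.
- rewrite size_map /PP size_filter.
  have kc : count (fun p => ~~ isJ n p) (iota 1 (hh n)) + count (isJ n) (iota 1 (hh n)) = hh n.
    by rewrite addnC -[X in _ = X](size_iota 1 (hh n)) -(count_predC (isJ n)).
  apply: (@real_bound n _ _ G5); rewrite kc /hh.
  by have := odd_double_half n; case: (odd n) => /= ?; lia.
Qed.


Definition sums (l : seq nat) : seq nat :=
  foldr (fun a S => undup (S ++ map (addn a) S)) [:: 0] l.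

Lemma mem_sums l v : (v \in sums l) = ps l v.
Proof.
elim: l v => [|a l IH] v /=; first by rewrite inE.
rewrite mem_undup mem_cat IH; congr orb.
apply/mapP/andP => [[w wl ->]|[av pl]].
  by rewrite leq_addr addKn -IH.
by exists (v - a); [rewrite IH|rewrite subnKC].
Qed.

Definition GOODb n :=
  [&& all (fun p => (sumn (xp n p) == n) && all (fun a => 0 < a) (xp n p)) (PP n),
      all (fun p => p \notin sums (xp n p)) (PP n),
      all (fun p => all (fun q => (q != p) ==> (q \in sums (xp n p))) (PP n)) (PP n),
      all (fun v => isJ n v ==> has (fun p => v \notin sums (xp n p)) (PP n)) (iota 1 (hh n))
    & expn 2 (2 * count (isJ n) (iota 1 (hh n))).+1 < expn n 2].

Lemma GOODb_GOOD n : GOODb n -> GOOD n.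
Proof.
case/and5P=> [/allP H1 /allP H2 /allP H3 /allP H4 H5]; split => //.
- by move=> p /H1 /andP[/eqP e a]; split.
- by move=> p /H2; rewrite mem_sums => /negbTE.
- by move=> p q pP qP qp; move/allP: (H3 _ pP) => /(_ _ qP); rewrite qp mem_sums.
- move=> v /andP[v1 vh] Jv.
  have : v \in iota 1 (hh n) by rewrite mem_iota v1 /= addnC addn1 ltnS.
  move/H4; rewrite Jv => /hasP[p pP]; rewrite mem_sums => /negbTE.
  by exists p.
Qed.

Lemma small_good : all GOODb (iota 5 36).
Proof. vm_compute. reflexivity. Qed.


Lemma jsel_prop {n p} : hh n - j0 n <= p -> p <= hh n - 2 -> 2 <= j0 n ->
  let j := jsel n p in
  [/\ hh n - p <= j, j < 2 * (hh n - p), j <= j0 n,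
      (j == j0 n) || (2 * j <= j0 n) &
      exists2 i, i < trunc_log 2 (j0 n) & j = j0 n %/ expn 2 i].
Proof.
move=> p1 p2 J2 j; rewrite /j /jsel.
set J := j0 n in J2 p1 *.
have Jh : 3 * J < hh n by move: J2; rewrite /J /j0; have := leq_divM (hh n).-1 3; lia.
set g := hh n - p.
have g2 : 2 <= g by rewrite /g; lia.
have gJ : g <= J by rewrite /g; lia.
set t := J %/ g.
have t1 : 0 < t by rewrite /t divn_gt0 //; lia.
have [bt tb] := andP (trunc_log_bounds (isT : 1 < 2) t1).
set i := trunc_log 2 t in bt tb *.
set b := expn 2 i in bt tb *.
have b0 : 0 < b by rewrite /b expn_gt0.
have gt : g * t <= J by rewrite mulnC leq_divM.
have c1 : g <= J %/ b.
  by rewrite leq_divRL //; apply: leq_trans gt; rewrite leq_mul2l bt orbT.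
have c2 : J %/ b < 2 * g.
  rewrite ltn_divLR //; apply: (leq_trans (ltn_ceil J (ltnW g2))).
  rewrite -/t; rewrite expnS in tb.
  apply: (leq_trans (_ : t.+1 * g <= (2 * b) * g)); first by rewrite leq_mul2r tb orbT.
  by rewrite mulnAC.
have bJ : 2 * b <= J.
  have := leq_divM J b; have : g * b <= J %/ b * b by rewrite leq_mul2r c1 orbT.
  move=> H1 H2; apply: leq_trans H2; apply: leq_trans H1; rewrite leq_mul2r g2 orbT //.
split => //.
- by apply: leq_div.
- case: (posnP i) => [i0|ipos].
    by rewrite /b i0 expn0 divn1 eqxx.
  have b2 : 2 <= b by rewrite /b -(expn1 2) leq_pexp2l.
  apply/orP; right; apply: leq_trans (leq_divM J b).
  by rewrite mulnC leq_mul2l b2 orbT.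
- exists i => //.
  apply: trunc_log_max => //; by rewrite expnS.
Qed.

Lemma basics {n} : 41 <= n ->
  [/\ 2 * hh n <= n, n <= 2 * hh n + 1, 3 * j0 n <= (hh n).-1,
      (hh n).-1 <= 3 * j0 n + 2 & 6 <= j0 n].
Proof.
move=> Hn; have := odd_double_half n; rewrite /j0 /hh.
have := leq_divM (n./2).-1 3; have := ltn_ceil (n./2).-1 (isT : 0 < 3).
case: (odd n) => /= a b c; rewrite -muln2 in c; split; try lia.
Qed.

Lemma spec_iff {n} : 41 <= n -> spec n = (n == 2 * hh n) && (hh n == 3 * j0 n + 3).
Proof.
move=> Hn; have [b1 b2 b3 b4 b5] := basics Hn.
rewrite /spec; have := odd_double_half n.
have := divn_eq (hh n) 3; have := ltn_mod (hh n) 3.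
rewrite /j0; have := divn_eq (hh n).-1 3; have := ltn_mod (hh n).-1 3.
rewrite /dvdn; case: (odd n) => /= c d e f g; rewrite -muln2 in g.
  apply/esym/negbTE; lia.
have -> : 0 < (hh n).-1 %/ 3 by lia.
rewrite andbT; apply/eqP/andP => [m0|[/eqP x /eqP y]]; last by lia.
split; apply/eqP; lia.
Qed.

Lemma ps_big_ones big k u t : ps big u -> t <= k -> ps (big ++ nseq k 1) (u + t).
Proof. by move=> H tk; apply: ps_cat => //; rewrite ps_ones. Qed.

Lemma isJ_h n : isJ n (hh n).
Proof. by rewrite /isJ eqxx. Qed.

Lemma isJ_spec {n} : spec n -> isJ n (hh n - j0 n - 1).
Proof. by move=> s; rewrite /isJ s eqxx orbT. Qed.

Lemma isJ_jsel {n p} : 41 <= n -> hh n - j0 n <= p -> p <= hh n - 2 -> isJ n (jsel n p).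
Proof.
move=> Hn p1 p2; have [b1 b2 b3 b4 b5] := basics Hn; rewrite /isJ; apply/orP; right; apply/orP; right.
apply/hasP; exists p; last by [].
rewrite /Brange mem_iota p1 /=; lia.
Qed.

Lemma Y_lack j m : 1 <= j -> all (leq j.+1) (Ybig j m) -> ps (Y j m) j = false.
Proof.
move=> j1 Ya; apply/negbTE/negP => H.
by have := ps_lack _ _ _ _ Ya H; case/orP; lia.
Qed.

Lemma Y_all {j m} : 1 <= j -> (3 * j).+1 <= m -> sumn (Y j m) = m -> Cov (Y j m) j (m - j.+1) ->
  forall v, 1 <= v -> v <= m -> v != j -> v != m - j -> ps (Y j m) v.
Proof.
move=> j1 jm Ys Yc v v1 vm vj vmj.
case: (leqP v (m - j.+1)) => vle; first by apply: Yc.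
have H : ps (Y j m) (m - v) by apply: Yc; lia.
by have := ps_compl H; rewrite Ys (_ : m - (m - v) = v) //; lia.
Qed.

Lemma all_pos_Y j m : all (leq j.+1) (Ybig j m) -> all (fun a => 0 < a) (Y j m).
Proof.
move=> Ya; rewrite /Y all_cat all_nseq orbT andbT.
by apply: sub_all Ya => a; apply: leq_trans.
Qed.

Lemma lack_gen big k c v : all (leq c) big -> ps (big ++ nseq k 1) v -> k < v -> v < c -> False.
Proof. by move=> A H kv vc; have := ps_lack _ _ _ _ A H; case/orP; lia. Qed.

Lemma xp_good {n p} : 41 <= n -> p \in PP n ->
  [/\ sumn (xp n p) = n, all (fun a => 0 < a) (xp n p), ps (xp n p) p = false &
      forall q, 1 <= q -> q <= hh n -> q != p -> ~~ isJ n q -> ps (xp n p) q].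
Proof.
move=> Hn; rewrite mem_PP => /and3P[p1 ph pJ].
have [b1 b2 b3 b4 b5] := basics Hn.
have sI := spec_iff Hn.
have pnh : p != hh n by apply: contraNneq pJ => ->; apply: isJ_h.
have qnh : forall q, ~~ isJ n q -> q != hh n.
  by move=> q qJ; apply: contraNneq qJ => ->; apply: isJ_h.
rewrite /xp.
case: eqP => [pt|pnt].
  rewrite /top; split.
  - by rewrite /= sumn_nseq; lia.
  - by rewrite /= all_nseq orbT andbT; lia.
  - apply/negbTE/negP => H.
    by apply: (lack_gen [:: n - hh n + 2] (hh n - 2) (n - hh n + 2) _ _ H) => /=; rewrite ?leqnn //; lia.
  - move=> q q1 qh qp qJ; have := qnh q qJ => qh'.
    have := ps_big_ones [:: n - hh n + 2] (hh n - 2) 0 q (ps0 _) _.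
    by rewrite add0n; apply; lia.
case: leqP => [pB|pA].
  have p2 : p <= hh n - 2 by lia.
  have [g1 g2 g3 g4 _] := jsel_prop pB p2 (ltac:(lia)).
  have jJ := isJ_jsel Hn pB p2.
  set j := jsel n p in g1 g2 g3 g4 jJ *.
  have j1 : 1 <= j by lia.
  have m1 : (3 * j).+1 <= p + j by lia.
  have m2 : p + j != 4 * j + 2.
    by case/orP: g4 => [/eqP ->|]; lia.
  have [Ys Yc Ya] := Y_prop j1 m1 m2 (ltac:(apply/orP; left; lia)).
  have YA := Y_all j1 m1 Ys Yc.
  split.
  - by rewrite /= Ys; lia.
  - by rewrite /= all_pos_Y // andbT; lia.
  - rewrite /=; have -> : ps (Y j (p + j)) p = false.
      apply/negbTE/negP => H; have := ps_compl H.
      by rewrite Ys (_ : p + j - p = j) ?Y_lack //; lia.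
    by rewrite /= (_ : n - (p + j) <= p = false) //; apply/negbTE; lia.
  - move=> q q1 qh qp qJ.
    have qj : q != j by apply: contraNneq qJ => e; rewrite e.
    have qpj : q != p + j - j by rewrite (_ : p + j - j = p) //; lia.
    by apply: ps_consL; apply: YA => //; lia.
case: ifP => [/andP[sp /eqP pe]|nsp].
  move: (sp); rewrite sI => /andP[/eqP e1 /eqP e2].
  have sJ := isJ_spec sp.
  split.
  - by rewrite /= sumn_nseq; lia.
  - by rewrite /= all_nseq orbT.
  - apply/negbTE/negP => H.
    by apply: (lack_gen [:: p.+2; p.+2] p.-1 p.+2 _ _ H) => /=; rewrite ?leqnn //; lia.
  - move=> q q1 qh qp qJ; have := qnh q qJ => qh'.
    have qs : q != hh n - j0 n - 1 by apply: contraNneq qJ => ->.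
    case: (ltnP q p) => qlt.
      have := ps_big_ones [:: p.+2; p.+2] p.-1 0 q (ps0 _) _.
      by rewrite add0n; apply; lia.
    have := ps_big_ones [:: p.+2; p.+2] p.-1 (p.+2 + 0) (q - p.+2) (ps_consR _ (ps0 _)) _.
    by rewrite (_ : p.+2 + 0 + (q - p.+2) = q); [apply; lia | lia].
case: leqP => [pW|pY].
  have p3 : 3 * p + 1 <= n.
    case s: (spec n); move: s; rewrite sI.
      case/andP=> /eqP e1 /eqP e2.
      have : p != hh n - j0 n - 1 by apply: contraNneq pJ => ->; by apply: isJ_spec; rewrite sI; apply/andP; split; apply/eqP.
      lia.
    by move/negbT; rewrite negb_and => /orP[] /eqP; lia.
  split.
  - by rewrite /= sumn_nseq; lia.
  - by rewrite /= all_nseq orbT andbT; lia.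
  - apply/negbTE/negP => H.
    by apply: (lack_gen [:: n - p.*2; p.+1] p.-1 p.+1 _ _ H) => /=; rewrite ?leqnn ?andbT //; lia.
  - move=> q q1 qh qp qJ; have := qnh q qJ => qh'.
    case: (ltnP q p) => qlt.
      have := ps_big_ones [:: n - p.*2; p.+1] p.-1 0 q (ps0 _) _.
      by rewrite add0n; apply; lia.
    have := ps_big_ones [:: n - p.*2; p.+1] p.-1 (p.+1 + 0) (q - p.+1) (ps_consL _ (ps_consR _ (ps0 _))) _.
    by rewrite (_ : p.+1 + 0 + (q - p.+1) = q); [apply; lia | lia].
have m2 : n != 4 * p + 2 by lia.
have [Ys Yc Ya] := Y_prop p1 (ltac:(lia) : (3 * p).+1 <= n) m2 (ltac:(case: (ltnP 1 p) => h1; apply/orP; [left | right]; lia)).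
split => //.
- exact: all_pos_Y.
- exact: Y_lack.
- move=> q q1 qh qp qJ; have := qnh q qJ => qh'.
  by apply: Yc => //; lia.
Qed.

Lemma notJ {n w} : 41 <= n -> j0 n < w -> w != hh n -> (spec n -> w != hh n - j0 n - 1) -> ~~ isJ n w.
Proof.
move=> Hn Jw wh ws; have [b1 b2 b3 b4 b5] := basics Hn.
rewrite /isJ negb_or negb_or wh /=; apply/andP; split.
  by case s: (spec n) => //=; apply: ws.
apply/hasP => [[p pB /eqP e]]; move: pB; rewrite /Brange mem_iota => /andP[pl pu].
have [_ _ g3 _ _] := jsel_prop pl (ltac:(lia) : p <= hh n - 2) (ltac:(lia)).
by move: g3; rewrite e; lia.
Qed.

Lemma count_le_sub (a : pred nat) (s T : seq nat) : uniq s -> (forall x, x \in s -> a x -> x \in T) -> count a s <= size T.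
Proof.
move=> us H; rewrite -size_filter; apply: uniq_leq_size; first by rewrite filter_uniq.
by move=> x; rewrite mem_filter => /andP[ax xs]; apply: H.
Qed.

Lemma good_large n : 41 <= n -> GOOD n.
Proof.
move=> Hn; have [b1 b2 b3 b4 b5] := basics Hn.
have sI := spec_iff Hn.
split.
- by move=> p /(xp_good Hn) [].
- by move=> p /(xp_good Hn) [].
- move=> p q pP qP qp; have [_ _ _ H] := xp_good Hn pP.
  by move: qP; rewrite mem_PP => /and3P[q1 qh qJ]; apply: H.
- move=> v /andP[v1 vh]; rewrite /isJ => /or3P[/eqP vhh|/andP[sp /eqP ve]|/hasP[p0 pB /eqP e]].
  + exists (hh n).-1.
      rewrite mem_PP; apply/and3P; split; try lia.
      by apply: notJ => //; try lia; try (move=> _; lia).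
    rewrite /xp eqxx /top; apply/negbTE/negP => H.
    by apply: (lack_gen [:: n - hh n + 2] (hh n - 2) (n - hh n + 2) _ _ H) => /=; rewrite ?leqnn //; lia.
  + move: (sp); rewrite sI => /andP[/eqP e1 /eqP e2].
    have pP : hh n - j0 n - 2 \in PP n.
      rewrite mem_PP; apply/and3P; split; try lia.
      by apply: notJ => //; try lia; try (move=> _; lia).
    exists (hh n - j0 n - 2) => //.
    rewrite /xp ifF; last by apply/negbTE; lia.
    rewrite ifF; last by apply/negbTE; lia.
    rewrite sp eqxx /=; apply/negbTE/negP => H.
    by apply: (lack_gen [:: (hh n - j0 n - 2).+2; (hh n - j0 n - 2).+2] (hh n - j0 n - 2).-1 (hh n - j0 n - 2).+2 _ _ H) => /=; rewrite ?leqnn //; lia.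
  + move: pB; rewrite /Brange mem_iota => /andP[pl pu].
    have p2 : p0 <= hh n - 2 by lia.
    have pP : p0 \in PP n.
      rewrite mem_PP; apply/and3P; split; try lia.
      by apply: notJ => //; try lia; try (move=> _; lia).
    exists p0 => //.
    rewrite /xp ifF; last by apply/negbTE; lia.
    rewrite pl.
    have [g1 g2 g3 g4 _] := jsel_prop pl p2 (ltac:(lia)).
    rewrite -e; set j := jsel n p0 in g1 g2 g3 g4 *.
    have j1 : 1 <= j by lia.
    have m1 : (3 * j).+1 <= p0 + j by lia.
    have m2 : p0 + j != 4 * j + 2 by case/orP: g4 => [/eqP ->|]; lia.
    have [Ys Yc Ya] := Y_prop j1 m1 m2 (ltac:(apply/orP; left; lia)).
    rewrite /= Y_lack //=; apply/negbTE; lia.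
- set k := count _ _.
  set L := trunc_log 2 (j0 n).
  have kL : k <= L + 2.
    have := @count_le_sub (isJ n) (iota 1 (hh n)) (hh n :: hh n - j0 n - 1 :: map (fun i => j0 n %/ expn 2 i) (iota 0 L)) (iota_uniq _ _).
    rewrite /= size_map size_iota addn2; apply.
    move=> x; rewrite mem_iota => /andP[x1 x2].
    rewrite /isJ => /or3P[/eqP ->|/andP[_ /eqP ->]|/hasP[p0 pB /eqP e]]; rewrite ?inE ?eqxx ?orbT //.
    move: pB; rewrite /Brange mem_iota => /andP[pl pu].
    have [_ _ _ _ [i iL ji]] := jsel_prop pl (ltac:(lia) : p0 <= hh n - 2) (ltac:(lia)).
    apply/orP; right; apply/orP; right.
    apply/mapP; exists i; first by rewrite mem_iota.
    by rewrite -e.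
  have e2 : expn 2 L <= j0 n by apply: trunc_logP; lia.
  have e3 : expn 2 (2 * k).+1 <= 32 * (expn 2 L * expn 2 L).
    rewrite -expnD (_ : 32 = expn 2 5) // -expnD; apply: leq_pexp2l => //; lia.
  have e4 : expn 2 L * expn 2 L <= j0 n * j0 n by apply: leq_mul.
  rewrite (_ : expn n 2 = n * n); last by rewrite expnS expn1.
  have e5 : 6 * j0 n <= n by lia.
  have e6 : 36 * (j0 n * j0 n) <= n * n by nia.
  have : 0 < j0 n * j0 n by rewrite muln_gt0; apply/andP; split; lia.
  lia.
Qed.


Theorem proposition1p4 (n : nat) (hn : 5 <= n) :
  exists X : seq (seq nat),
    [/\ uniq X, all (is_partition n) X,
        (* (1) *)
        ~ (exists i : nat, [/\ 1 <= i, i.*2 <= n & forall x, x \in X -> is_partial_sum i x]),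
        (* (2) *)
        (forall x, x \in X ->
           exists i : nat, [/\ 1 <= i, i.*2 <= n &
             forall y, y \in X -> y != x -> is_partial_sum i y])
      & (* (3) *)
        (INR (size X) > INR n / 2 - log2 (INR n))%R].
Proof.
apply: main_of_good.
case: (leqP 41 n) => H; first exact: good_large.
apply: GOODb_GOOD.
move/allP: small_good; apply; rewrite mem_iota; apply/andP; split => //.
Qed.
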